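(* Let $\mathcal{F}$ be an $N$-dimensional commutative algebra with basis $e_1,\dots,e_N$ and structure constants $a^k_{ij}$, such that $e_1$ is a unity element and $\mathcal{F}$ carries a non-degenerate symmetric inner product $\langle\,,\rangle$ with components $\eta_{ij}$ satisfying the Frobenius condition $\langle a\circ b,c\rangle=\langle a,b\circ c\rangle$. Define $h^{(1)}=\eta_{1p}u^p$ and recursively $h^{(n+1)}=a^i_{jk}u^ju^k\,\partial h^{(n)}/\partial u^i$ for $n\ge1$. Then $\mathcal{F}$ is a Jordan algebra if and only if $h^{(n)}$ is a conserved density for every $n\ge 1$.
   Context: Summation over repeated indices is understood; indices are raised and lowered with $\eta_{ij}$ and its inverse. A conserved density is a function $h(u^1,\dots,u^N)$ satisfying, for all $k,p$, $a^i_{jk}u^j\,\partial^2 h/\partial u^i\partial u^p=a^i_{jp}u^j\,\partial^2 h/\partial u^i\partial u^k$. A commutative algebra is Jordan if $(x\circ y)\circ(x\circ x)=x\circ(y\circ(x\circ x))$ for all $x,y$. *)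

(* Defs.v *)
From HB Require Import structures.
From mathcomp Require Import all_boot all_order all_algebra.
From mathcomp Require Import mpoly.
Set Implicit Arguments. Unset Strict Implicit. Unset Printing Implicit Defensive.
Import Order.TTheory GRing.Theory.
Local Open Scope ring_scope.

(* Structure constants: a k i j = a^k_{ij}, i.e. e_i o e_j = \sum_k a^k_{ij} e_k.
   Basis index set 'I_n; the unity e_1 is the index ord0 (so n = N.-1 + 1). *)

Definition amul (R : fieldType) (n : nat) (a : 'I_n -> 'I_n -> 'I_n -> R)
  (x y : 'rV[R]_n) : 'rV[R]_n :=
  \row_k \sum_(i < n) \sum_(j < n) a k i j * x 0 i * y 0 j.

Definition is_Jordan (R : fieldType) (n : nat) (a : 'I_n -> 'I_n -> 'I_n -> R) :=
  forall x y : 'rV[R]_n,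
    amul a (amul a x y) (amul a x x) = amul a x (amul a y (amul a x x)).

(* h^(1) = eta_{1p} u^p ; h^(m+1) = a^i_{jk} u^j u^k dh^(m)/du^i.
   hdens a eta m is h^(m+1). *)
Fixpoint hdens (R : fieldType) (n : nat) (a : 'I_n.+1 -> 'I_n.+1 -> 'I_n.+1 -> R)
  (eta : 'M[R]_n.+1) (m : nat) : {mpoly R[n.+1]} :=
  match m with
  | 0 => \sum_(p < n.+1) eta ord0 p *: 'X_p
  | m'.+1 => \sum_(i < n.+1) \sum_(j < n.+1) \sum_(k < n.+1)
               a i j k *: ('X_j * 'X_k * mderiv i (hdens a eta m'))
  end.

Definition conserved_density (R : fieldType) (n : nat)
  (a : 'I_n -> 'I_n -> 'I_n -> R) (h : {mpoly R[n]}) :=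
  forall k p : 'I_n,
    \sum_(i < n) \sum_(j < n) a i j k *: ('X_j * mderiv p (mderiv i h)) =
    \sum_(i < n) \sum_(j < n) a i j p *: ('X_j * mderiv k (mderiv i h)).

(* Main.v *)
Require Import Defs.
From HB Require Import structures.
From mathcomp Require Import all_boot all_order all_algebra.
From mathcomp Require Import mpoly.
From mathcomp Require Import ring.
Import GRing.Theory.
Local Open Scope ring_scope.

Section Gen.
Variables (R : fieldType) (n : nat) (a : 'I_n.+1 -> 'I_n.+1 -> 'I_n.+1 -> R).
Hypothesis aC : forall k i j, a k i j = a k j i.
Variables (S : comRingType) (f : R -> S).
Local Notation N := n.+1.
Local Notation V := 'rV[S]_N.

Definition gmul_def (x y : V) : V :=
  \row_k \sum_(i < N) \sum_(j < N) f (a k i j) * x 0 i * y 0 j.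
Fact gmul_key : unit. Proof. exact: tt. Qed.
Definition gmul := locked_with gmul_key gmul_def.
Lemma gmulE x y : gmul x y = gmul_def x y. Proof. by rewrite /gmul unlock. Qed.

Local Notation "x *o y" := (gmul x y) (at level 40, left associativity).

Lemma gmulC x y : x *o y = y *o x.
Proof.
rewrite !gmulE; apply/rowP => k; rewrite !mxE exchange_big /=.
by apply: eq_bigr => i _; apply: eq_bigr => j _; rewrite aC; ring.
Qed.

Lemma gmulDr x y z : x *o (y + z) = x *o y + x *o z.
Proof.
rewrite !gmulE; apply/rowP => k; rewrite !mxE -big_split /=.
apply: eq_bigr => i _; rewrite -big_split; apply: eq_bigr => j _; by rewrite mxE mulrDr.
Qed.

Lemma gmulZr c x y : x *o (c *: y) = c *: (x *o y).
Proof.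
rewrite !gmulE; apply/rowP => k; rewrite !mxE mulr_sumr.
by apply: eq_bigr => i _; rewrite mulr_sumr; apply: eq_bigr => j _; rewrite mxE; ring.
Qed.

Lemma gmul0r x : x *o 0 = 0.
Proof.
rewrite gmulE; apply/rowP => k; rewrite !mxE big1 // => i _.
by rewrite big1 // => j _; rewrite mxE mulr0.
Qed.
Lemma gmulNr x y : x *o (- y) = - (x *o y).
Proof. by rewrite -scaleN1r gmulZr scaleN1r. Qed.
Lemma gmulBr x y z : x *o (y - z) = x *o y - x *o z.
Proof. by rewrite gmulDr gmulNr. Qed.
Lemma gmulMnr x y m : x *o (y *+ m) = (x *o y) *+ m.
Proof. elim: m => [|m IH]; first by rewrite !mulr0n gmul0r. by rewrite !mulrS gmulDr IH. Qed.
Lemma gmulDl x y z : (y + z) *o x = y *o x + z *o x.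
Proof. by rewrite !(gmulC _ x) gmulDr. Qed.
Lemma gmulZl c x y : (c *: y) *o x = c *: (y *o x).
Proof. by rewrite !(gmulC _ x) gmulZr. Qed.
Lemma gmulNl x y : (- y) *o x = - (y *o x).
Proof. by rewrite !(gmulC _ x) gmulNr. Qed.
Lemma gmulBl x y z : (y - z) *o x = y *o x - z *o x.
Proof. by rewrite !(gmulC _ x) gmulBr. Qed.
Lemma gmulMnl x y m : (y *+ m) *o x = (y *o x) *+ m.
Proof. by rewrite !(gmulC _ x) gmulMnr. Qed.
Lemma gmul0l x : 0 *o x = 0.
Proof. by rewrite gmulC gmul0r. Qed.

Lemma gmul_sumr x I (r : seq I) (P : pred I) F :
  x *o (\sum_(i <- r | P i) F i) = \sum_(i <- r | P i) x *o F i.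
Proof. exact: (big_morph _ (gmulDr x) (gmul0r x)). Qed.
Lemma gmul_suml x I (r : seq I) (P : pred I) F :
  (\sum_(i <- r | P i) F i) *o x = \sum_(i <- r | P i) F i *o x.
Proof. exact: (big_morph _ (fun u v => gmulDl x u v) (gmul0l x)). Qed.

Definition islin (g : V -> V) :=
  (forall u v, g (u + v) = g u + g v) /\ (forall c u, g (c *: u) = c *: g u).

Lemma lin_expand g x : islin g -> g x = \sum_(j < N) x 0 j *: g 'e_j.
Proof.
case=> gD gZ.
have g0 : g 0 = 0.
  by apply: (addrI (g 0)); rewrite -gD !addr0.
rewrite {1}(row_sum_delta x) (big_morph g gD g0).
by apply: eq_bigr => j _; rewrite gZ.
Qed.

Lemma lin_ext g h x : islin g -> islin h -> (forall j, g 'e_j = h 'e_j) -> g x = h x.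
Proof.
move=> lg lh e; rewrite (lin_expand _ x lg) (lin_expand _ x lh).
by apply: eq_bigr => j _; rewrite e.
Qed.

(* the polarized linearized Jordan identity *)
Definition Bp x1 x2 y z :=
  (z *o y) *o (x1 *o x2) + (z *o y) *o (x2 *o x1) + (x1 *o y) *o (x2 *o z)
  + (x2 *o y) *o (x1 *o z) + (x1 *o y) *o (z *o x2) + (x2 *o y) *o (z *o x1).
Definition Bq x1 x2 y z :=
  z *o (y *o (x1 *o x2)) + z *o (y *o (x2 *o x1)) + x1 *o (y *o (x2 *o z))
  + x2 *o (y *o (x1 *o z)) + x1 *o (y *o (z *o x2)) + x2 *o (y *o (z *o x1)).
Definition Lp x y z := (z *o y) *o (x *o x) + (x *o y) *o (x *o z) + (x *o y) *o (z *o x).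
Definition Lq x y z := z *o (y *o (x *o x)) + x *o (y *o (x *o z)) + x *o (y *o (z *o x)).

Ltac lintac := unfold Bp, Bq, Lp, Lq; split => [u v|c u];
  rewrite ?(gmulDl,gmulDr,gmulZl,gmulZr); apply/rowP => ?; rewrite !mxE; ring.

Lemma B_ext :
  (forall i j k l, Bp 'e_i 'e_j 'e_k 'e_l = Bq 'e_i 'e_j 'e_k 'e_l) ->
  forall x1 x2 y z, Bp x1 x2 y z = Bq x1 x2 y z.
Proof.
move=> H x1 x2 y z.
apply: (@lin_ext (fun u => Bp u x2 y z) (fun u => Bq u x2 y z)); [lintac|lintac|].
move=> i; apply: (@lin_ext (fun u => Bp 'e_i u y z) (fun u => Bq 'e_i u y z)); [lintac|lintac|].
move=> j; apply: (@lin_ext (fun u => Bp 'e_i 'e_j u z) (fun u => Bq 'e_i 'e_j u z)); [lintac|lintac|].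
move=> k; apply: (@lin_ext (fun u => Bp 'e_i 'e_j 'e_k u) (fun u => Bq 'e_i 'e_j 'e_k u)); [lintac|lintac|].
by move=> l; apply: H.
Qed.

Definition Jp x y := (x *o y) *o (x *o x).
Definition Jq x y := x *o (y *o (x *o x)).

Lemma comb3 (T : zmodType) (g a1 a2 a3 : T) :
  a1 = 0 -> a2 = 0 -> a3 = 0 -> g *+ 2 = a1 - a2 - a3 *+ 2 -> g *+ 2 = 0.
Proof. by move=> -> -> -> ->; rewrite subrr mul0rn subr0. Qed.
Lemma comb3' (T : zmodType) (g a1 a2 a3 : T) :
  a1 = 0 -> a2 = 0 -> a3 = 0 -> g = a1 - a2 - a3 -> g = 0.
Proof. by move=> -> -> -> ->; rewrite !subrr. Qed.

Lemma eq_sub0 (T : zmodType) (u v : T) : u = v -> u - v = 0.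
Proof. by move=> ->; rewrite subrr. Qed.
Lemma sub0_eq (T : zmodType) (u v : T) : u - v = 0 -> u = v.
Proof. by move/eqP; rewrite subr_eq0 => /eqP. Qed.

Lemma lin_step1 (h2 : forall s : S, s *+ 2 = 0 -> s = 0) :
  (forall x y, Jp x y = Jq x y) -> forall x y z, Lp x y z = Lq x y z.
Proof.
move=> J x y z.
have e1 := J (x + z) y; have e2 := J (x - z) y; have e3 := J z y.
move: e1 e2 e3; rewrite /Jp /Jq !(gmulDl,gmulDr,gmulNl,gmulNr) => /rowP e1 /rowP e2 /rowP e3.
apply/rowP => k; move: (e1 k) (e2 k) (e3 k); rewrite /Lp /Lq !mxE.
move=> /eq_sub0 e1' /eq_sub0 e2' /eq_sub0 e3'.
apply: sub0_eq; apply: h2. apply: (@comb3 _ _ _ _ _ e1' e2' e3'); ring.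
Qed.

Lemma lin_step2 :
  (forall x y z, Lp x y z = Lq x y z) -> forall x1 x2 y z, Bp x1 x2 y z = Bq x1 x2 y z.
Proof.
move=> L x1 x2 y z.
have e1 := L (x1 + x2) y z; have e2 := L x1 y z; have e3 := L x2 y z.
move: e1 e2 e3; rewrite /Lp /Lq !(gmulDl,gmulDr) => /rowP e1 /rowP e2 /rowP e3.
apply/rowP => k; move: (e1 k) (e2 k) (e3 k); rewrite /Bp /Bq !mxE.
move=> /eq_sub0 e1' /eq_sub0 e2' /eq_sub0 e3'.
apply: sub0_eq; apply: (@comb3' _ _ _ _ _ e1' e2' e3'); ring.
Qed.

Lemma B_to_L (h2 : forall s : S, s *+ 2 = 0 -> s = 0) :
  (forall x1 x2 y z, Bp x1 x2 y z = Bq x1 x2 y z) -> forall x y z, Lp x y z = Lq x y z.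
Proof.
move=> B x y z; have /rowP e := B x x y z.
apply/rowP => k; move: (e k); rewrite /Bp /Bq /Lp /Lq !mxE => /eq_sub0 e'.
apply: sub0_eq; apply: h2; rewrite -e'; ring.
Qed.

Lemma L_to_J (h3 : forall s : S, s *+ 3 = 0 -> s = 0) :
  (forall x y z, Lp x y z = Lq x y z) -> forall x y, Jp x y = Jq x y.
Proof.
move=> L x y; have /rowP e := L x y x.
apply/rowP => k; move: (e k); rewrite /Jp /Jq /Lp /Lq !mxE => /eq_sub0 e'.
apply: sub0_eq; apply: h3; rewrite -e'; ring.
Qed.


Fixpoint gpow x r := match r with 0 => x | r'.+1 => x *o gpow x r' end.
Fixpoint gPhi x r v := match r with 0 => v | r'.+1 => v *o gpow x r' + x *o gPhi x r' v end.

Lemma deriv_pow (D : V -> V) (DL : forall u w, D (u *o w) = D u *o w + u *o D w) x r :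
  D (gpow x r) = gPhi x r (D x).
Proof. elim: r => [|r IH] //=; by rewrite DL IH. Qed.

Section Jordan.
Hypothesis JJ : forall x y, Jp x y = Jq x y.
Hypothesis JL : forall x y z, Lp x y z = Lq x y z.
Variable x : V.
Local Notation A w := (x *o w).
Local Notation B w := ((x *o x) *o w).

Lemma cleanL y z :
  (y *o z) *o (x *o x) + ((x *o y) *o (x *o z)) *+ 2 = z *o (y *o (x *o x)) + (x *o (y *o (x *o z))) *+ 2.
Proof.
have := JL x y z; rewrite /Lp /Lq (gmulC z y) (gmulC z x) => e.
by rewrite mulr2n addrA e -addrA -mulr2n.
Qed.
Lemma ABcomm w : A (B w) = B (A w).
Proof. by have := JJ x w; rewrite /Jp /Jq !(gmulC _ (x *o x)) => <-; rewrite gmulC. Qed.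

Lemma P2 r : (x *o x) *o gpow x r = gpow x r.+2.
Proof.
elim: r => [|r IH]; first by rewrite /= gmulC.
by rewrite [gpow x r.+1]/= -ABcomm IH.
Qed.

Lemma iiL r w : gpow x r.+2 *o w =
  B (gpow x r *o w) + (gpow x r.+1 *o A w) *+ 2 - A (gpow x r *o A w) *+ 2.
Proof.
have := cleanL (gpow x r) w.
rewrite (gmulC (gpow x r) (x *o x)) P2 (gmulC (gpow x r *o w)) [x *o gpow x r]/= => e.
by rewrite gmulC -[w *o _](addrK (A (gpow x r *o A w) *+ 2)) -e.
Qed.

Definition Cm r := (forall w, x *o (gpow x r *o w) = gpow x r *o (x *o w)) /\
  (forall w, (x *o x) *o (gpow x r *o w) = gpow x r *o ((x *o x) *o w)).

Lemma Cm_all r : Cm r.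
Proof.
suff : Cm r /\ Cm r.+1 by case.
elim: r => [|r [[Cr1 Cr2] [Cs1 Cs2]]].
  split; split => w //=.
  - by rewrite ABcomm.
  - by rewrite ABcomm.
split; first by split.
split => w.
- rewrite !iiL !(gmulBr,gmulDr,gmulNr,gmulMnr).
  congr (_ + _ - _).
  + by rewrite ABcomm Cr1.
  + by rewrite Cs1.
  + by rewrite Cr1.
- rewrite !iiL !(gmulBr,gmulDr,gmulNr,gmulMnr).
  congr (_ + _ - _).
  + by rewrite Cr2.
  + by rewrite Cs2 ABcomm.
  + by rewrite -ABcomm Cr2 ABcomm.
Qed.

Lemma J1 r v : gPhi x r (A v) = A (gPhi x r v).
Proof.
elim: r v => [|r IH] v //=.
rewrite IH gmulDr; congr (_ + _).
by rewrite gmulC -(proj1 (Cm_all r)) (gmulC v).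
Qed.

Lemma J3 r : gPhi x r (x *o x) = gpow x r.+1 *+ r.+1.
Proof.
elim: r => [|r IH] //=.
by rewrite IH gmulMnr P2 [in RHS]mulrS.
Qed.

Variables (tau : V -> S) (tauD : forall u w, tau (u + w) = tau u + tau w)
  (tauA : forall u v w, tau ((u *o v) *o w) = tau (u *o (v *o w))).

Lemma SA r u v : tau (u *o gPhi x r v) = tau (gPhi x r u *o v).
Proof.
elim: r u v => [|r IH] u v //=.
rewrite gmulDr gmulDl !tauD; congr (_ + _).
  by rewrite tauA (gmulC (gpow x r) v).
by rewrite -tauA IH (gmulC u) J1.
Qed.
End Jordan.

End Gen.

Lemma mderivXU (R : fieldType) (m : nat) (i k : 'I_m) :
  mderiv i ('X_k : {mpoly R[m]}) = ((k == i) : nat)%:R.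
Proof.
rewrite mderivX mnm1E; case: eqP => [->|_].
  have -> : (U_(i) - U_(i))%MM = 0%MM by apply/mnmP => j; rewrite !mnmE subnn.
  by rewrite mpolyX0 scale1r.
by rewrite scale0r.
Qed.

Lemma sum_delta (T : nzRingType) (m : nat) (F : 'I_m -> T) (k : 'I_m) :
  \sum_(j < m) F j * ((j == k) : nat)%:R = F k.
Proof.
rewrite (bigD1 k) //= eqxx mulr1 big1 ?addr0 // => j /negbTE ->.
by rewrite mulr0.
Qed.

Section K.
Variables (R : fieldType) (n : nat) (a : 'I_n.+1 -> 'I_n.+1 -> 'I_n.+1 -> R)
  (eta : 'M[R]_n.+1).
Hypothesis aC : forall k i j, a k i j = a k j i.
Hypothesis unit1 : forall k j, a k ord0 j = (k == j)%:R.
Hypothesis frob : forall i j l,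
  \sum_(k < n.+1) a k i j * eta k l = \sum_(k < n.+1) eta i k * a k j l.
Local Notation N := n.+1.
Local Notation K := {mpoly R[N]}.
Local Notation cst := (@mpolyC N R).
Local Notation V := 'rV[K]_N.
Local Notation "x *o y" := (@gmul R n a _ cst x y) (at level 40, left associativity).

Definition U : V := \row_i 'X_i.
Definition dv (i : 'I_N) (x : V) : V := \row_k mderiv i (x 0 k).
Definition DV (v x : V) : V := \sum_i v 0 i *: dv i x.
Definition tau (x : V) : K := \sum_p cst (eta ord0 p) * x 0 p.
Definition ip (x y : V) : K := \sum_i \sum_j cst (eta i j) * x 0 i * y 0 j.

Lemma gmul_entry (x y : V) k : (x *o y) 0 k = \sum_i \sum_j cst (a k i j) * x 0 i * y 0 j.
Proof. by rewrite gmulE mxE. Qed.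

Lemma dv_mul i (x y : V) : dv i (x *o y) = dv i x *o y + x *o dv i y.
Proof.
apply/rowP => k; rewrite !mxE !gmul_entry raddf_sum -big_split /=.
apply: eq_bigr => p _; rewrite raddf_sum -big_split /=; apply: eq_bigr => q _.
by rewrite !mxE !mderivM mderivC; ring.
Qed.

Lemma dv_U i : dv i U = 'e_i.
Proof. by apply/rowP => k; rewrite !mxE mderivXU eqxx /= eq_sym. Qed.

Lemma dv_e i k : dv i 'e_k = 0.
Proof. by apply/rowP => j; rewrite !mxE -mpolyC_nat mderivC. Qed.

Lemma dv_comm i j x : dv i (dv j x) = dv j (dv i x).
Proof. by apply/rowP => k; rewrite !mxE mderiv_comm. Qed.

Lemma dvD i (x y : V) : dv i (x + y) = dv i x + dv i y.
Proof. by apply/rowP => k; rewrite !mxE mderivD. Qed.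

Lemma dv_sum i I (r : seq I) (P : pred I) F :
  dv i (\sum_(j <- r | P j) F j) = \sum_(j <- r | P j) dv i (F j).
Proof.
apply: (big_morph _ (dvD i)).
by apply/rowP => k; rewrite !mxE mderiv0.
Qed.

Lemma dvZ i c x : dv i (c *: x) = mderiv i c *: x + c *: dv i x.
Proof. apply/rowP => k; rewrite !mxE; exact: mderivM. Qed.

Lemma tauD (x y : V) : tau (x + y) = tau x + tau y.
Proof. by rewrite /tau -big_split; apply: eq_bigr => p _; rewrite mxE mulrDr. Qed.

Lemma tau0 : tau 0 = 0.
Proof. by rewrite /tau big1 // => p _; rewrite mxE mulr0. Qed.

Lemma tau_sum I (r : seq I) (P : pred I) F :
  tau (\sum_(j <- r | P j) F j) = \sum_(j <- r | P j) tau (F j).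
Proof. exact: (big_morph _ tauD tau0). Qed.

Lemma tauZ c x : tau (c *: x) = c * tau x.
Proof. by rewrite /tau mulr_sumr; apply: eq_bigr => p _; rewrite mxE; ring. Qed.

Lemma tauN x : tau (- x) = - tau x.
Proof. by rewrite -scaleN1r tauZ mulN1r. Qed.

Lemma tauMn x m : tau (x *+ m) = tau x *+ m.
Proof. elim: m => [|m IH]; first by rewrite !mulr0n tau0. by rewrite !mulrS tauD IH. Qed.

Lemma tau_dv i x : mderiv i (tau x) = tau (dv i x).
Proof.
rewrite /tau raddf_sum /=; apply: eq_bigr => p _.
by rewrite mderiv_mulC mxE.
Qed.

Lemma DV_mul (v x y : V) : DV v (x *o y) = DV v x *o y + x *o DV v y.
Proof.
rewrite /DV; transitivity (\sum_i ((v 0 i *: dv i x) *o y + x *o (v 0 i *: dv i y))).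
  by apply: eq_bigr => i _; rewrite dv_mul scalerDr gmulZl // gmulZr.
by rewrite big_split /= gmul_suml // gmul_sumr.
Qed.

Lemma DV_U v : DV v U = v.
Proof.
rewrite {2}(row_sum_delta v) /DV; apply: eq_bigr => i _.
by rewrite dv_U.
Qed.

Lemma DVD (v x y : V) : DV v (x + y) = DV v x + DV v y.
Proof. by rewrite /DV -big_split; apply: eq_bigr => i _; rewrite dvD scalerDr. Qed.

Lemma DV0 v : DV v 0 = 0.
Proof.
rewrite /DV big1 // => i _.
have -> : dv i 0 = 0 by apply/rowP => k; rewrite !mxE mderiv0.
by rewrite scaler0.
Qed.

Lemma DVMn v x m : DV v (x *+ m) = DV v x *+ m.
Proof. elim: m => [|m IH]; first by rewrite !mulr0n DV0. by rewrite !mulrS DVD IH. Qed.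

Lemma tau_DV v x : tau (DV v x) = \sum_i v 0 i * mderiv i (tau x).
Proof. by rewrite /DV tau_sum; apply: eq_bigr => i _; rewrite tauZ tau_dv. Qed.

Fixpoint W m := match m with 0 => U | m'.+1 => DV (U *o U) (W m') end.

Lemma hdens_W m : hdens a eta m = tau (W m).
Proof.
elim: m => [|m IH] /=.
  by rewrite /tau; apply: eq_bigr => p _; rewrite mxE mul_mpolyC.
rewrite tau_DV -IH; apply: eq_bigr => i _.
rewrite gmul_entry mulr_suml; apply: eq_bigr => j _.
rewrite mulr_suml; apply: eq_bigr => k _.
by rewrite !mxE -mul_mpolyC !mulrA.
Qed.


Lemma eta_unit i j : \sum_p eta ord0 p * a p i j = eta i j.
Proof.
rewrite -frob; under eq_bigr => k _ do rewrite unit1.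
by rewrite (bigD1 i) //= eqxx mul1r big1 ?addr0 // => k /negbTE ->; rewrite mul0r.
Qed.

Lemma tau_gmul (x y : V) : tau (x *o y) = ip x y.
Proof.
rewrite /tau /ip.
transitivity (\sum_p \sum_i \sum_j cst (eta ord0 p) * cst (a p i j) * x 0 i * y 0 j).
  apply: eq_bigr => p _; rewrite gmul_entry mulr_sumr; apply: eq_bigr => i _.
  by rewrite mulr_sumr; apply: eq_bigr => j _; ring.
rewrite exchange_big; apply: eq_bigr => i _; rewrite exchange_big; apply: eq_bigr => j _ /=.
rewrite -!mulr_suml -eta_unit (rmorph_sum cst); congr (_ * _ * _).
by apply: eq_bigr => p _; rewrite rmorphM.
Qed.

Lemma ip_assoc (x y z : V) : ip (x *o y) z = ip x (y *o z).
Proof.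
rewrite /ip.
transitivity (\sum_i \sum_j \sum_l cst (\sum_p a p i j * eta p l) * x 0 i * y 0 j * z 0 l).
  transitivity (\sum_p \sum_l \sum_i \sum_j cst (a p i j * eta p l) * x 0 i * y 0 j * z 0 l).
    apply: eq_bigr => p _; apply: eq_bigr => l _; rewrite gmul_entry mulr_sumr mulr_suml.
    apply: eq_bigr => i _; rewrite mulr_sumr mulr_suml; apply: eq_bigr => j _.
    by rewrite rmorphM; ring.
  under eq_bigr => p _ do rewrite exchange_big.
  rewrite exchange_big; apply: eq_bigr => i _ /=.
  rewrite exchange_big /=.
  under eq_bigr => l _ do rewrite exchange_big /=.
  rewrite exchange_big; apply: eq_bigr => j _ /=; apply: eq_bigr => l _ /=.
  by rewrite -!mulr_suml (rmorph_sum cst).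
apply: eq_bigr => i _.
transitivity (\sum_p \sum_j \sum_l cst (eta i p * a p j l) * x 0 i * y 0 j * z 0 l).
  symmetry; rewrite exchange_big; apply: eq_bigr => j _; rewrite exchange_big; apply: eq_bigr => l _ /=.
  by rewrite -!mulr_suml -(rmorph_sum cst) -frob.
apply: eq_bigr => p _; rewrite gmul_entry mulr_sumr; apply: eq_bigr => j _.
by rewrite mulr_sumr; apply: eq_bigr => l _; rewrite rmorphM; ring.
Qed.

Lemma tauA (x y z : V) : tau ((x *o y) *o z) = tau (x *o (y *o z)).
Proof. by rewrite !tau_gmul ip_assoc. Qed.

Lemma ip_e p z : ip 'e_p z = \sum_j cst (eta p j) * z 0 j.
Proof.
rewrite /ip (bigD1 p) //= [X in _ + X]big1 ?addr0.
  by apply: eq_bigr => j _; rewrite mxE !eqxx mulr1.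
by move=> i /negbTE ne; apply: big1 => j _; rewrite mxE eqxx ne mulr0 mul0r.
Qed.

Hypothesis eta_inv : eta \in unitmx.

Lemma nondeg z : (forall p, ip 'e_p z = 0) -> z = 0.
Proof.
move=> H; apply/rowP => l; rewrite mxE.
have e : \sum_p cst (invmx eta l p) * ip 'e_p z = z 0 l.
  under eq_bigr => p _ do rewrite ip_e mulr_sumr.
  rewrite exchange_big /=.
  transitivity (\sum_j cst ((invmx eta *m eta) l j) * z 0 j).
    apply: eq_bigr => j _; rewrite mxE rmorph_sum mulr_suml.
    by apply: eq_bigr => p _; rewrite rmorphM mulrA.
  rewrite mulVmx // (bigD1 l) //= big1 ?addr0.
    by rewrite mxE eqxx rmorph1 mul1r.
  by move=> j /negbTE ne; rewrite mxE eq_sym ne rmorph0 mul0r.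
by rewrite -e big1 // => p _; rewrite H mulr0.
Qed.

Lemma ue_entry k i : (U *o 'e_k) 0 i = \sum_j cst (a i j k) * 'X_j.
Proof.
rewrite gmul_entry; apply: eq_bigr => j _.
under eq_bigr => l _ do rewrite !mxE eqxx /=.
by rewrite sum_delta.
Qed.

Lemma cons_form h k p :
  \sum_i \sum_j a i j k *: ('X_j * mderiv p (mderiv i h)) =
  \sum_i (U *o 'e_k) 0 i * mderiv p (mderiv i h).
Proof.
apply: eq_bigr => i _; rewrite ue_entry mulr_suml; apply: eq_bigr => j _.
by rewrite mul_mpolyC scalerAl.
Qed.

Lemma key_form (v X : V) p :
  \sum_i v 0 i * mderiv p (mderiv i (tau X)) =
  tau (dv p (DV v X)) - tau (DV (dv p v) X).
Proof.
rewrite /DV dv_sum !tau_sum -sumrB; apply: eq_bigr => i _.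
by rewrite dvZ tauD !tauZ !tau_dv mxE; ring.
Qed.


Lemma dv_Ue p k : dv p (U *o 'e_k) = 'e_p *o 'e_k.
Proof. by rewrite dv_mul dv_U dv_e gmul0r addr0. Qed.

Lemma dvMn i x m : dv i (x *+ m) = dv i x *+ m.
Proof.
elim: m => [|m IH]; last by rewrite !mulrS dvD IH.
by rewrite !mulr0n; apply/rowP => k; rewrite !mxE mderiv0.
Qed.

Definition Qf (X : V) k p := tau (dv p (DV (U *o 'e_k) X)) - tau (DV ('e_p *o 'e_k) X).

Lemma cons_of X : (forall k p, Qf X k p = Qf X p k) -> conserved_density a (tau X).
Proof. by move=> H k p; rewrite !cons_form !key_form !dv_Ue; exact: H. Qed.

Lemma of_cons X : conserved_density a (tau X) -> forall k p, Qf X k p = Qf X p k.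
Proof. by move=> H k p; have := H k p; rewrite !cons_form !key_form !dv_Ue. Qed.

Lemma QfMn X m k p : Qf (X *+ m) k p = Qf X k p *+ m.
Proof. by rewrite /Qf !DVMn dvMn !tauMn mulrnBl. Qed.

Lemma gmap (x y : 'rV[R]_N) : (map_mx cst x) *o (map_mx cst y) = map_mx cst (@gmul R n a _ idfun x y).
Proof.
apply/rowP => k; rewrite gmul_entry gmulE !mxE rmorph_sum; apply: eq_bigr => i _.
rewrite rmorph_sum; apply: eq_bigr => j _; by rewrite !mxE !rmorphM.
Qed.

Definition ev (v : 'I_N -> R) (X : V) : 'rV[R]_N := \row_k meval v (X 0 k).

Lemma ev_mul v (X Y : V) : ev v (X *o Y) = @gmul R n a _ idfun (ev v X) (ev v Y).
Proof.
apply/rowP => k; rewrite mxE gmul_entry gmulE mxE raddf_sum /=; apply: eq_bigr => i _.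
rewrite raddf_sum /=; apply: eq_bigr => j _.
by rewrite !mxE !mevalM mevalC.
Qed.

Lemma ev_U (x : 'rV[R]_N) : ev (fun i => x 0 i) U = x.
Proof. by apply/rowP => k; rewrite !mxE mevalXU. Qed.

Lemma ev_cst v (y : 'rV[R]_N) : ev v (map_mx cst y) = y.
Proof. by apply/rowP => k; rewrite !mxE mevalC. Qed.


Lemma natmul_inj (T : idomainType) (hT : forall m, (m.+1)%:R != 0 :> T) m (s t : T) :
  s *+ m.+1 = t *+ m.+1 -> s = t.
Proof.
move/eqP; rewrite -subr_eq0 -mulrnBl -mulr_natr mulf_eq0 (negbTE (hT m)) orbF subr_eq0.
by move/eqP.
Qed.

Section Main.
Hypothesis ch : [pchar R] =i pred0.

Lemma hR m : (m.+1)%:R != 0 :> R.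
Proof. by move/pcharf0P: ch => ->. Qed.

Lemma hK m : (m.+1)%:R != 0 :> K.
Proof. by rewrite -mpolyC_nat mpolyC_eq0 hR. Qed.

Lemma c2R (s : R) : s *+ 2 = 0 -> s = 0.
Proof. by move=> h; apply: (@natmul_inj _ hR 1 s 0); rewrite mul0rn. Qed.
Lemma c2K (s : K) : s *+ 2 = 0 -> s = 0.
Proof. by move=> h; apply: (@natmul_inj _ hK 1 s 0); rewrite mul0rn. Qed.
Lemma c3K (s : K) : s *+ 3 = 0 -> s = 0.
Proof. by move=> h; apply: (@natmul_inj _ hK 2 s 0); rewrite mul0rn. Qed.

Lemma amulE (x y : 'rV[R]_N) : amul a x y = @gmul R n a _ idfun x y.
Proof. by rewrite gmulE. Qed.

Local Notation gC := (@gmulC R n a aC _ cst).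

Lemma onlyif : is_Jordan a -> forall m, conserved_density a (hdens a eta m).
Proof.
move=> HJ.
have JR : forall x y : 'rV[R]_N, Jp R n a R idfun x y = Jq R n a R idfun x y.
  by move=> x y; rewrite /Jp /Jq -!amulE; exact: HJ.
have LR := @lin_step1 R n a aC R idfun c2R JR.
have BR := @lin_step2 R n a aC R idfun LR.
have BK : forall x1 x2 y z : V, Bp R n a K cst x1 x2 y z = Bq R n a K cst x1 x2 y z.
  apply: (@B_ext R n a aC K cst) => i j k l.
  have E : forall i, ('e_i : V) = map_mx cst 'e_i by move=> i'; rewrite map_delta_mx.
  rewrite !E /Bp /Bq !gmap -!(@map_mxD _ _ cst).
  by have := BR 'e_i 'e_j 'e_k 'e_l; rewrite /Bp /Bq => ->.
have LK := @B_to_L R n a K cst c2K BK.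
have JK := @L_to_J R n a K cst c3K LK.
have HW : forall m, W m = gpow R n a K cst U m *+ m`!.
  elim=> [|m IH] /=; first by rewrite mulr1n.
  rewrite IH DVMn (@deriv_pow R n a K cst _ (DV_mul (U *o U))) DV_U.
  by rewrite (@J3 R n a aC K cst JK U m) -mulrnA factS.
move=> m; rewrite hdens_W HW; apply: cons_of => k p; rewrite !QfMn; congr (_ *+ _).
have DVp : forall v, DV v (gpow R n a K cst U m) = gPhi R n a K cst U m v.
  by move=> v; rewrite (@deriv_pow R n a K cst _ (DV_mul v)) DV_U.
have dvp : forall i, dv i (gpow R n a K cst U m) = gPhi R n a K cst U m 'e_i.
  by move=> i; rewrite (@deriv_pow R n a K cst _ (dv_mul i)) dv_U.
rewrite /Qf !DVp !(@J1 R n a aC K cst JK LK) !dv_mul !dv_U !tauD (gC 'e_k 'e_p).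
congr (_ + _ - _).
- by rewrite (@SA R n a aC K cst JK LK U tau tauD tauA) gC.
- by rewrite -!dvp dv_comm.
Qed.


Lemma Dsq (D : V -> V) (DL : forall u w, D (u *o w) = D u *o w + u *o D w) c
  (DU : D U = c) : D (U *o U) = (U *o c) *+ 2.
Proof. by rewrite DL DU gC mulr2n. Qed.

Lemma DY (D : V -> V) (DL : forall u w, D (u *o w) = D u *o w + u *o D w) c
  (DU : D U = c) : D ((U *o U) *o (U *o U)) = ((U *o U) *o (U *o c)) *+ 4.
Proof.
rewrite DL (@Dsq D DL c DU) (@gmulMnl R n a aC) (@gmulMnr R n a) (gC (U *o c)).
by rewrite -mulrnDr.
Qed.

Lemma W3 : tau (W 3) = tau ((U *o U) *o (U *o U)) *+ 6.
Proof.
rewrite /= !(DV_U, DV_mul, DVD) !(@gmulDl R n a aC, @gmulDr R n a) !tauD.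
have t1 : tau (((U *o U) *o U) *o U) = tau ((U *o U) *o (U *o U)) by rewrite tauA.
have t2 : tau ((U *o (U *o U)) *o U) = tau ((U *o U) *o (U *o U)).
  by rewrite tauA (gC (U *o U) U) -tauA.
have t3 : tau (U *o ((U *o U) *o U)) = tau ((U *o U) *o (U *o U)).
  by rewrite (gC (U *o U) U) -tauA.
have t4 : tau (U *o (U *o (U *o U))) = tau ((U *o U) *o (U *o U)) by rewrite -tauA.
rewrite t1 t2 t3 t4.
by rewrite !mulrS mulr0n addr0 !addrA.
Qed.

Lemma QY_form k p : Qf ((U *o U) *o (U *o U)) k p =
  (tau ((U *o 'e_p) *o (U *o (U *o 'e_k))) *+ 2 + tau ((U *o U) *o ('e_p *o (U *o 'e_k)))
   + tau ((U *o U) *o (U *o ('e_p *o 'e_k)))) *+ 4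
  - tau ((U *o U) *o (U *o ('e_p *o 'e_k))) *+ 4.
Proof.
rewrite /Qf (DY _ (DV_mul _) _ (DV_U _)) (DY _ (DV_mul _) _ (DV_U _)) dvMn !tauMn.
rewrite dv_mul (Dsq _ (dv_mul p) _ (dv_U p)) dv_mul dv_U dv_Ue.
by rewrite (@gmulMnl R n a aC) gmulDr !tauD; ring.
Qed.

Lemma Tsym (u w : V) : tau (u *o (U *o w)) = tau (w *o (U *o u)).
Proof. by rewrite -tauA (gC u U) gC. Qed.

Lemma cancel_form (A B B' C : K) :
  (A *+ 2 + B + C) *+ 4 - C *+ 4 = (A *+ 2 + B' + C) *+ 4 - C *+ 4 -> B = B'.
Proof. by move/addIr/(@natmul_inj _ hK 3)/addIr/addrI. Qed.

Lemma ifdir : (forall m, conserved_density a (hdens a eta m)) -> is_Jordan a.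
Proof.
move=> H.
have C3 := H 3; rewrite hdens_W W3 -tauMn in C3.
have Q3 := @of_cons _ C3.
have QY : forall k p, Qf ((U *o U) *o (U *o U)) k p = Qf ((U *o U) *o (U *o U)) p k.
  by move=> k p; apply: (@natmul_inj _ hK 5); rewrite -!QfMn; exact: Q3.
have G : forall k p, tau ((U *o U) *o ('e_p *o (U *o 'e_k))) =
                     tau ((U *o U) *o ('e_k *o (U *o 'e_p))).
  move=> k p; have := QY k p; rewrite !QY_form (gC 'e_k 'e_p) (Tsym (U *o 'e_p)).
  exact: cancel_form.
have Z : forall k, (U *o U) *o (U *o 'e_k) = U *o ((U *o U) *o 'e_k).
  move=> k; apply/eqP; rewrite -subr_eq0; apply/eqP; apply: nondeg => p.
  rewrite -tau_gmul gmulBr tauD tauN; apply/eqP; rewrite subr_eq0; apply/eqP.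
  have e1 : tau ('e_p *o ((U *o U) *o (U *o 'e_k))) = tau ((U *o U) *o ('e_p *o (U *o 'e_k))).
    by rewrite -tauA (gC 'e_p (U *o U)) tauA.
  have e2 : tau ('e_p *o (U *o ((U *o U) *o 'e_k))) = tau ((U *o U) *o ('e_k *o (U *o 'e_p))).
    by rewrite -tauA (gC 'e_p U) gC tauA.
  by rewrite e1 e2 G.
have Zall : forall y : V, (U *o U) *o (U *o y) = U *o ((U *o U) *o y).
  move=> y.
  have l1 : islin n K (fun y => (U *o U) *o (U *o y)).
    by split => [u v|c u]; rewrite ?gmulDr ?gmulZr.
  have l2 : islin n K (fun y => U *o ((U *o U) *o y)).
    by split => [u v|c u]; rewrite ?gmulDr ?gmulZr.
  exact: (@lin_ext n K _ _ y l1 l2 Z).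
move=> x y.
have := congr1 (ev (fun i => x 0 i)) (Zall (map_mx cst y)).
rewrite !ev_mul ev_U ev_cst !amulE => e.
rewrite (@gmulC R n a aC _ idfun (gmul R n a R idfun x y)).
rewrite (@gmulC R n a aC _ idfun y).
exact: e.
Qed.

End Main.

End K.


Theorem proposition3 (R : fieldType) (n : nat)
  (a : 'I_n.+1 -> 'I_n.+1 -> 'I_n.+1 -> R) (eta : 'M[R]_n.+1) :
  [pchar R] =i pred0 ->
  (* commutativity *)
  (forall k i j, a k i j = a k j i) ->
  (* e_1 is a unity: e_1 o e_j = e_j *)
  (forall k j, a k ord0 j = (k == j)%:R) ->
  (* eta symmetric, non-degenerate *)
  eta^T = eta -> eta \in unitmx ->
  (* Frobenius: <e_i o e_j, e_l> = <e_i, e_j o e_l> *)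
  (forall i j l, \sum_(k < n.+1) a k i j * eta k l = \sum_(k < n.+1) eta i k * a k j l) ->
  (is_Jordan a <-> forall m : nat, conserved_density a (hdens a eta m)).
Proof.
move=> ch aC unit1 _ einv frob; split.
- exact: (@onlyif R n a eta aC unit1 frob ch).
- exact: (@ifdir R n a eta aC unit1 frob einv ch).
Qed.
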